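(* Let $\vec G=(V,\vec E)$ be a totally cyclic directed graph without loops and without parallel or antiparallel edges, whose underlying simple graph is three-edge-connected. Then there is a total order $<$ of $\vec E$ such that there is a strong map $\mathcal M^*(\vec G)\longrightarrow\mathcal M(<)$.
   Context: $\mathcal M(\vec G)$ is the oriented matroid of the directed graph on its edge set (signed circuits: cycles of the underlying graph, with edges signed $+$ or $-$ according to whether they are traversed forwards or backwards); $\mathcal M^*(\vec G)$ is its dual, whose signed circuits are the signed minimal cuts $\big(\{(u,w)\in\vec E:u\in S,w\notin S\},\{(u,w)\in\vec E:w\in S,u\notin S\}\big)$ for $S\subset V$ with $S$ and $V\setminus S$ both inducing connected subgraphs. $\vec G$ is totally cyclic if every edge lies in a directed cycle. For a finite set $E$ totally ordered by $<$, $\mathcal M(<)$ is the uniform rank 2 oriented matroid on $E$ whose signed circuits are $(\{e_1,e_3\},\{e_2\})$ and $(\{e_2\},\{e_1,e_3\})$ for $e_1<e_2<e_3$, and whose signed cocircuits are $(\{e':e'<e\},\{e'':e''>e\})$ and its opposite. A strong map $\mathcal M_1\longrightarrow\mathcal M_2$ (same ground set) exists if every cocircuit of $\mathcal M_2$ is a covector of $\mathcal M_1$, equivalently every circuit of $\mathcal M_1$ is a vector of $\mathcal M_2$. *)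

(* Defs.v *)
From mathcomp Require Import all_boot.
Set Implicit Arguments. Unset Strict Implicit. Unset Printing Implicit Defensive.

(* A directed graph: finite vertex set V, finite edge set E, each edge e
   going from [tl e] to [hd e]. *)

(* A signed subset of E: (positive part, negative part). *)
Definition signed_set (E : finType) := ({set E} * {set E})%type.

Definition scompose (E : finType) (X Y : signed_set E) : signed_set E :=
  (X.1 :|: (Y.1 :\: X.2), X.2 :|: (Y.2 :\: X.1)).

Inductive covector_of (E : finType) (cocirc : signed_set E -> Prop)
  : signed_set E -> Prop :=
| cov_zero : covector_of cocirc (set0, set0)
| cov_comp X Y : cocirc X -> covector_of cocirc Y ->
                 covector_of cocirc (scompose X Y).

(* Signed circuits of M(G): cycles of the underlying graph, traversed
   v_0, e_0, v_1, e_1, ..., v_k, e_k, v_0 (k+1 distinct vertices and edges);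
   an edge is signed + if traversed forwards, - if backwards. *)
Definition signed_cycle (V E : finType) (tl hd : E -> V) (X : signed_set E) : Prop :=
  exists k (vs : 'I_k.+1 -> V) (es : 'I_k.+1 -> E),
    injective vs /\ injective es /\
    (forall i : 'I_k.+1,
        (tl (es i) = vs i /\ hd (es i) = vs (ordS i) /\ es i \in X.1 /\ es i \notin X.2)
     \/ (hd (es i) = vs i /\ tl (es i) = vs (ordS i) /\ es i \in X.2 /\ es i \notin X.1)) /\
    (forall e, e \in X.1 :|: X.2 -> exists i, e = es i).

(* Cocircuits of the dual M^*(G) are the circuits of M(G). *)
Definition dual_cocircuit (V E : finType) (tl hd : E -> V) := signed_cycle tl hd.

Definition dual_covector (V E : finType) (tl hd : E -> V) :=
  covector_of (dual_cocircuit tl hd).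

Definition totally_cyclic (V E : finType) (tl hd : E -> V) : Prop :=
  forall e : E, exists X : signed_set E,
    signed_cycle tl hd X /\ X.2 = set0 /\ e \in X.1.

Definition no_loops (V E : finType) (tl hd : E -> V) : Prop :=
  forall e : E, tl e != hd e.

Definition no_parallel_antiparallel (V E : finType) (tl hd : E -> V) : Prop :=
  forall e f : E, e != f ->
    ~ ((tl e = tl f /\ hd e = hd f) \/ (tl e = hd f /\ hd e = tl f)).

Definition uadj (V E : finType) (tl hd : E -> V) (A : {set E}) : rel V :=
  fun u v => [exists e in A, ((tl e == u) && (hd e == v)) || ((tl e == v) && (hd e == u))].

Definition three_edge_connected (V E : finType) (tl hd : E -> V) : Prop :=
  forall F : {set E}, #|F| <= 2 -> forall u v : V, connect (uadj tl hd (~: F)) u v.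

(* A total order < on E, given by an injective ranking r : E -> nat
   (e < f iff r e < r f).  Signed cocircuits of M(<). *)
Definition order_cocircuit (E : finType) (r : E -> nat) (X : signed_set E) : Prop :=
  exists e : E,
    X = ([set f | r f < r e], [set f | r e < r f]) \/
    X = ([set f | r e < r f], [set f | r f < r e]).

(* A strong map M1 --> M2 exists iff every cocircuit of M2 is a covector of M1.
   Here M1 = M^*(G), M2 = M(<). *)
Definition strong_map_dual_to_order (V E : finType) (tl hd : E -> V) (r : E -> nat) : Prop :=
  forall X, order_cocircuit r X -> dual_covector tl hd X.

(* Main.v *)
Require Import Defs.
From mathcomp Require Import all_boot zify.
Set Implicit Arguments. Unset Strict Implicit. Unset Printing Implicit Defensive.

Definition arcs (V E : finType) (s t : E -> V) (ok : pred E) : rel V :=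
  fun u w => [exists f, ok f && (s f == u) && (t f == w)].

Lemma cross_step (T : finType) (r : rel T) (A : {set T}) a b :
  connect r a b -> a \in A -> b \notin A ->
  exists u v, r u v /\ u \in A /\ v \notin A.
Proof.
case/connectP => p pth ->.
elim: p a pth => [|c p IH] a /= pth aA; first by rewrite aA.
move/andP: pth => [rac pth] lb.
case cA: (c \in A); first exact: IH pth cA lb.
by exists a, c; rewrite cA.
Qed.

Lemma ordS_val k (i : 'I_k.+1) : val (ordS i) = if i < k then i.+1 else 0.
Proof.
rewrite /=. case: ifP => H; first by rewrite modn_small.
have -> : (i : nat) = k by move/negbT: H; rewrite -leqNgt; have := ltn_ord i; lia.
by rewrite modnn.
Qed.

Lemma cyc_exists (V E : finType) (s t : E -> V) (ok : pred E) (g : E) :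
  ok g -> s g != t g -> connect (arcs s t ok) (t g) (s g) ->
  exists k (vs : 'I_k.+1 -> V) (es : 'I_k.+1 -> E),
    injective vs /\ injective es /\
    (forall i, ok (es i) /\ s (es i) = vs i /\ t (es i) = vs (ordS i)) /\
    exists i, es i = g.
Proof.
move=> okg sgt.
case/connectP => p0 pth0 elast.
case: (shortenP pth0) elast => p pth uq _ elast.
set x := t g in pth uq elast *.
pose k := size p.
pose vs (i : 'I_k.+1) := nth x (x :: p) i.
pose ch u w := odflt g [pick f | ok f && (s f == u) && (t f == w)].
pose es (i : 'I_k.+1) := if i < k then ch (vs i) (nth x (x :: p) i.+1) else g.
have vsk : vs ord_max = s g by rewrite /vs /= -last_nth -elast.
have vs0 : vs ord0 = x by [].
have vsinj : injective vs.
  move=> i j /eqP; rewrite /vs nth_uniq //; first by move/eqP/val_inj.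
have key : forall i, ok (es i) /\ s (es i) = vs i /\ t (es i) = vs (ordS i).
  move=> i; rewrite /es; case: ifP => ik.
  - have : arcs s t ok (nth x (x :: p) i) (nth x p i) by apply/(pathP x pth).
    rewrite /arcs /ch; case: pickP => [f /andP [/andP [okf /eqP sf] /eqP tf] _ | H].
      by rewrite /= sf tf /vs ordS_val ik.
    by case/existsP => f; rewrite H.
  - have ie : i = ord_max.
      have : (i : nat) = k by move/negbT: ik; rewrite -leqNgt; have := ltn_ord i; lia.
      by move=> h; apply: val_inj.
    rewrite ie vsk; split => //; split => //.
    by rewrite (_ : ordS ord_max = ord0) //; apply: val_inj; rewrite ordS_val /= ltnn.
exists k, vs, es; split => //; split.
  move=> i j eij; apply: vsinj.
  by have [_ [<- _]] := key i; have [_ [<- _]] := key j; rewrite eij.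
split => //.
by exists ord_max; rewrite /es /= ltnn.
Qed.


Definition flowT (V E : finType) (s t : E -> V) (phi : E -> nat) :=
  forall v, \sum_(f | s f == v) phi f = \sum_(f | t f == v) phi f.

Lemma sum_card_es (E I : finType) (es : I -> E) (P : pred E) :
  \sum_(f | P f) #|[set i | es i == f]| = #|[set i | P (es i)]|.
Proof.
rewrite -[RHS]sum1_card (eq_bigl (fun i => P (es i))); last by move=> i; rewrite inE.
rewrite (partition_big es P) //.
apply: eq_bigr => f Pf.
rewrite -sum1_card; apply: eq_bigl => i.
by rewrite inE; case: (eqVneq (es i) f) => [->|]; rewrite ?Pf ?andbF.
Qed.

Lemma cycle_flow (V E : finType) (s t : E -> V) k (es : 'I_k.+1 -> E) :
  (forall i, t (es i) = s (es (ordS i))) ->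
  flowT s t (fun f => #|[set i | es i == f]|).
Proof.
move=> H v; rewrite !sum_card_es.
rewrite -(card_preimset _ (@ordS_inj k.+1)).
by apply: eq_card => j; rewrite !inE H.
Qed.

Lemma flow_lin (V E I : finType) (s t : E -> V) (c : I -> nat) (F : I -> E -> nat) :
  (forall i, flowT s t (F i)) -> flowT s t (fun f => \sum_i c i * F i f).
Proof.
move=> H v; rewrite exchange_big /= [RHS]exchange_big /=; apply: eq_bigr => i _.
by rewrite -!big_distrr H.
Qed.

Lemma flow_scale (V E : finType) (s t : E -> V) c phi :
  flowT s t phi -> flowT s t (fun f => c * phi f).
Proof. by move=> H v; rewrite -!big_distrr H. Qed.


Lemma flow_mkcond (V E : finType) (s t : E -> V) phi :
  flowT s t phi <-> forall v, \sum_f (if s f == v then phi f else 0) =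
                         \sum_f (if t f == v then phi f else 0).
Proof. by split => H v; have := H v; rewrite -!big_mkcond. Qed.

Lemma conf_cycle (V E : finType) (tl hd : E -> V) (p q : E -> nat) (g : E) :
  flowT tl hd p -> flowT tl hd q -> tl g != hd g -> p g != q g ->
  exists X : signed_set E, signed_cycle tl hd X /\
    X.1 \subset [set f | q f < p f] /\ X.2 \subset [set f | p f < q f] /\
    g \in X.1 :|: X.2.
Proof.
move=> Hp Hq tlhd pq.
pose sg f := q f < p f.
pose s f := if sg f then tl f else hd f.
pose t f := if sg f then hd f else tl f.
pose k f := if sg f then p f - q f else q f - p f.
have kflow : flowT s t k.
  apply/flow_mkcond => v.
  move/flow_mkcond: Hp => /(_ v) Hp; move/flow_mkcond: Hq => /(_ v) Hq.
  have : \sum_f ((if tl f == v then p f else 0) + (if hd f == v then q f else 0)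
                 + (if t f == v then k f else 0)) =
         \sum_f ((if hd f == v then p f else 0) + (if tl f == v then q f else 0)
                 + (if s f == v then k f else 0)).
    apply: eq_bigr => f _; rewrite /s /t /k /sg.
    case: (ltnP (q f) (p f)) => H;
    case: (tl f == v); case: (hd f == v) => /=; lia.
  rewrite !big_split /= Hp Hq; lia.
have kg : 0 < k g.
  rewrite /k /sg; case: (ltngtP (q g) (p g)) => H; [lia|lia|by rewrite H eqxx in pq].
have stg : s g != t g by rewrite /s /t; case: (sg g); rewrite // eq_sym.
pose ok := fun f => 0 < k f.
have reach : connect (arcs s t ok) (t g) (s g).
  apply/negPn/negP => nc.
  pose R := [set w | connect (arcs s t ok) (t g) w].
  have sgR : s g \notin R by rewrite inE.
  have tgR : t g \in R by rewrite inE connect0.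
  have sumR : forall (u : E -> V), \sum_(f | u f \in R) k f =
                 \sum_(v in R) \sum_(f | u f == v) k f.
    move=> u; rewrite (partition_big u (mem R)) //.
    apply: eq_bigr => v vR; apply: eq_bigl => f.
    by case: (eqVneq (u f) v) => [->|_]; rewrite ?eqxx ?andbT ?andbF.
  have E1 : \sum_(f | s f \in R) k f = \sum_(f | t f \in R) k f.
    by rewrite !sumR; apply: eq_bigr => v _; apply: kflow.
  have : \sum_(f | s f \in R) k f < \sum_(f | t f \in R) k f.
    rewrite !(big_mkcond (fun f => _ \in R)) /=.
    rewrite (bigD1 g) //= [X in _ < X](bigD1 g) //= (negbTE sgR) tgR.
    have : \sum_(i | i != g) (if s i \in R then k i else 0) <=
           \sum_(i | i != g) (if t i \in R then k i else 0).
      apply: leq_sum => f _.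
      case sR: (s f \in R) => //.
      case kf: (0 < k f); last by move/negbT: kf; rewrite -leqNgt leqn0 => /eqP ->; case: ifP.
      have -> : t f \in R.
        rewrite inE; apply: connect_trans (_ : connect _ (s f) (t f)).
          by move: sR; rewrite inE.
        apply: connect1; apply/existsP; exists f; rewrite /ok kf !eqxx.
        done.
      done.
    lia.
  by rewrite E1 ltnn.
have [n [vs [es [vsi [esi [key [i0 ei0]]]]]]] := cyc_exists kg stg reach.
pose X : signed_set E := ([set f | [exists i, es i == f] && (q f < p f)],
                          [set f | [exists i, es i == f] && (p f < q f)]).
exists X; split.
  exists n, vs, es; split => //; split => //; split.
    move=> i; have [ki [si ti]] := key i.
    move: si ti; rewrite /s /t /sg.
    have ex : [exists j, es j == es i] by apply/existsP; exists i.
    case: (ltngtP (q (es i)) (p (es i))) => H si ti.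
    - by left; rewrite /X !inE ex H /= ltnNge ltnW.
    - by right; rewrite /X !inE ex H /= ltnNge ltnW.
    - by move: ki; rewrite /ok /k /sg H ltnn subnn.
  move=> f; rewrite /X !inE -andb_orr => /andP [/existsP [i /eqP <-] _].
  by exists i.
split; first by apply/subsetP => f; rewrite !inE => /andP [].
split; first by apply/subsetP => f; rewrite !inE => /andP [].
have ex : [exists j, es j == g] by apply/existsP; exists i0; rewrite ei0.
rewrite /X !inE ex /=.
by case: (ltngtP (q g) (p g)) pq => // ->; rewrite eqxx.
Qed.


Lemma flow_covector (V E : finType) (tl hd : E -> V) (p q : E -> nat) :
  (forall f, tl f != hd f) -> flowT tl hd p -> flowT tl hd q ->
  dual_covector tl hd ([set f | q f < p f], [set f | p f < q f]).
Proof.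
move=> nl Hp Hq.
set P := [set f | q f < p f]; set N := [set f | p f < q f].
have main : forall s : seq E, exists Y : signed_set E, dual_covector tl hd Y /\
   Y.1 \subset P /\ Y.2 \subset N /\
   (forall g, g \in s -> g \in P :|: N -> g \in Y.1 :|: Y.2).
  elim => [|g s [Y [cY [Y1 [Y2 HY]]]]].
    by exists (set0, set0); split; [exact: cov_zero | split; rewrite ?sub0set].
  case gPN: (g \in P :|: N); last first.
    exists Y; split => //; split => //; split => // h; rewrite inE.
    by case/orP => [/eqP ->|/HY //]; rewrite gPN.
  have pq : p g != q g by move: gPN; rewrite !inE; case: ltngtP.
  have [X [cX [X1 [X2 gX]]]] := conf_cycle Hp Hq (nl g) pq.
  exists (scompose X Y); split; first exact: cov_comp.
  split; first by rewrite /scompose /=; apply/subsetP => f; rewrite !inE;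
     case/orP => [/(subsetP X1)|/andP [_ /(subsetP Y1)]]; rewrite inE.
  split; first by rewrite /scompose /=; apply/subsetP => f; rewrite !inE;
     case/orP => [/(subsetP X2)|/andP [_ /(subsetP Y2)]]; rewrite inE.
  have supp : forall h, (h \in X.1 :|: X.2) || (h \in Y.1 :|: Y.2) ->
                        h \in (scompose X Y).1 :|: (scompose X Y).2.
    move=> h; rewrite /scompose /= !inE.
    by case: (h \in X.1); case: (h \in X.2); case: (h \in Y.1); case: (h \in Y.2).
  move=> h; rewrite inE => /orP [/eqP -> _|hs hPN]; apply: supp.
    by rewrite gX.
  by rewrite HY ?orbT.
have [Y [cY [Y1 [Y2 HY]]]] := main (enum E).
have PN : forall f, f \in P -> f \in N -> False.
  by move=> f; rewrite !inE => H1 H2; lia.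
have -> : P = Y.1.
  apply/eqP; rewrite eqEsubset Y1 andbT; apply/subsetP => f fP.
  have := HY f (mem_enum _ f); rewrite in_setU fP /= => /(_ isT); rewrite in_setU => /orP [] // fY.
  by case: (PN f fP (subsetP Y2 f fY)).
have -> : N = Y.2.
  apply/eqP; rewrite eqEsubset Y2 andbT; apply/subsetP => f fN.
  have := HY f (mem_enum _ f); rewrite in_setU fN orbT => /(_ isT); rewrite in_setU => /orP [] // fY.
  by case: (PN f (subsetP Y1 f fY) fN).
by case: Y cY {Y1 Y2 HY}.
Qed.


Lemma iter_ordS k (i : 'I_k.+1) n : val (iter n (@ordS k.+1) i) = (i + n) %% k.+1.
Proof.
elim: n => [|n IH] /=; first by rewrite addn0 modn_small.
by rewrite IH -addn1 modnDml addn1 addnS.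
Qed.

Lemma tc_strong (V E : finType) (tl hd : E -> V) :
  totally_cyclic tl hd -> forall f, connect (arcs tl hd predT) (hd f) (tl f).
Proof.
move=> tc f; have [X [[k [vs [es [vsi [esi [H Hs]]]]]] [X2 fX]]] := tc f.
have fw : forall i, tl (es i) = vs i /\ hd (es i) = vs (ordS i).
  move=> i; case: (H i) => [[a [b _]]|[_ [_ [c _]]]]; first by [].
  by rewrite X2 inE in c.
have [i0 ->] : exists i, f = es i by apply: Hs; rewrite inE fX.
have step : forall n i, connect (arcs tl hd predT) (vs i) (vs (iter n (@ordS k.+1) i)).
  move=> n i; elim: n => [|n IH] //=.
  apply: connect_trans IH _; apply: connect1; apply/existsP.
  exists (es (iter n (@ordS k.+1) i)); have [-> ->] := fw (iter n (@ordS k.+1) i).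
  by rewrite !eqxx.
have [-> ->] := fw i0.
have e : iter k (@ordS k.+1) (ordS i0) = i0.
  apply: val_inj; apply: esym; rewrite iter_ordS ordS_val.
  case: ifP => h.
    by rewrite addSnnS modnDr modn_small.
  have e : (i0 : nat) = k by move/negbT: h; rewrite -leqNgt; have := ltn_ord i0; lia.
  by rewrite add0n modn_small.
by have := step k (ordS i0); rewrite e.
Qed.

Lemma closed_all (V E : finType) (tl hd : E -> V) :
  three_edge_connected tl hd ->
  (forall f, connect (arcs tl hd predT) (hd f) (tl f)) ->
  forall T : {set V}, (forall f, tl f \in T -> hd f \in T) ->
  forall u w, u \in T -> w \in T.
Proof.
move=> tec st T cl u w uT; apply/negPn/negP => wT.
have c : connect (uadj tl hd (~: set0)) u w by apply: tec; rewrite cards0.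
have [a [b [/existsP [e /andP [_ H]] [aT bT]]]] := cross_step c uT wT.
case/orP: H => /andP [/eqP ta /eqP hb].
  by move: bT; rewrite -hb cl // ta.
have hT : hd e \in T by rewrite hb.
have tT : tl e \notin T by rewrite ta.
have [a' [b' [/existsP [f /andP [/andP [_ /eqP ta'] /eqP hb']] [a'T b'T]]]] :=
  cross_step (st e) hT tT.
by move: b'T; rewrite -hb' cl // ta'.
Qed.

Lemma dichotomy (V E : finType) (tl hd : E -> V) (e e' : E) :
  three_edge_connected tl hd ->
  (forall f, connect (arcs tl hd predT) (hd f) (tl f)) ->
  e != e' ->
  connect (arcs tl hd (fun f => f != e')) (hd e) (tl e) \/
  connect (arcs tl hd (fun f => f != e)) (hd e') (tl e').
Proof.
move=> tec st nee.
case c1: (connect _ (hd e) (tl e)); first by left.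
case c2: (connect _ (hd e') (tl e')); first by right.
exfalso.
pose R := [set w | connect (arcs tl hd (fun f => f != e')) (hd e) w].
pose R' := [set w | connect (arcs tl hd (fun f => f != e)) (hd e') w].
have clR : forall f, f != e' -> tl f \in R -> hd f \in R.
  move=> f nf; rewrite !inE => H; apply: connect_trans H _; apply: connect1.
  by apply/existsP; exists f; rewrite nf !eqxx.
have clR' : forall f, f != e -> tl f \in R' -> hd f \in R'.
  move=> f nf; rewrite !inE => H; apply: connect_trans H _; apply: connect1.
  by apply/existsP; exists f; rewrite nf !eqxx.
have xR : tl e \notin R by rewrite inE c1.
have xR' : tl e' \notin R' by rewrite inE c2.
have yR : hd e \in R by rewrite inE connect0.
have yR' : hd e' \in R' by rewrite inE connect0.
have disj : forall u, u \in R -> u \in R' -> False.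
  move=> u uR uR'.
  have : tl e \in R :&: R'.
    apply: (closed_all tec st (T := R :&: R')) (_ : u \in R :&: R'); last by rewrite in_setI uR uR'.
    move=> f; rewrite !in_setI => /andP [fR fR'].
    case: (eqVneq f e) => [fe|fe]; first by move: fR; rewrite fe (negbTE xR).
    case: (eqVneq f e') => [fe'|fe']; first by move: fR'; rewrite fe' (negbTE xR').
    by rewrite clR // clR'.
  by rewrite in_setI (negbTE xR).
have cov : forall u, (u \in R) || (u \in R').
  move=> u.
  have : u \in R :|: R'.
    apply: (closed_all tec st (T := R :|: R')) (_ : hd e \in R :|: R'); last by rewrite in_setU yR.
    move=> f; rewrite !in_setU => /orP [fR|fR'].
      case: (eqVneq f e') => [->|fe']; first by rewrite yR' orbT.
      by rewrite clR.
    case: (eqVneq f e) => [->|fe]; first by rewrite yR.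
    by rewrite clR' ?orbT.
  by rewrite in_setU.
have c : connect (uadj tl hd (~: [set e; e'])) (hd e) (tl e).
  by apply: tec; rewrite cards2; case: (_ != _).
have [a [b [/existsP [f /andP [fF H]] [aR bR]]]] := cross_step c yR xR.
move: fF; rewrite !inE negb_or => /andP [fe fe'].
case/orP: H => /andP [/eqP ta /eqP hb].
  by move: bR; rewrite -hb clR // ta.
have tR' : tl f \in R' by move: (cov (tl f)); rewrite ta (negbTE bR).
apply: (disj (hd f)); first by rewrite hb.
exact: clR'.
Qed.


Lemma digits N K (a b : 'I_K -> nat) :
  (forall i, a i < N) -> (forall i, b i < N) ->
  \sum_(i < K) N ^ i * a i = \sum_(i < K) N ^ i * b i -> forall i, a i = b i.
Proof.
elim: K a b => [|K IH] a b Ha Hb H i; first by case: i.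
move: H; rewrite !big_ord_recl /= !expn0 !mul1n.
have Np : 0 < N by have := Ha ord0; lia.
have E1 : forall c : 'I_K.+1 -> nat, \sum_(i < K) N ^ bump 0 i * c (lift ord0 i) =
                   N * \sum_(i < K) N ^ i * c (lift ord0 i).
  by move=> c; rewrite big_distrr; apply: eq_bigr => j _; rewrite /bump /= expnS mulnA.
rewrite !E1 => H.
have h0 : a ord0 = b ord0.
  have := congr1 (modn^~ N) H.
  by rewrite ![N * _]mulnC ![_ + _ * N]addnC !modnMDl !modn_small.
have h1 : \sum_(i < K) N ^ i * a (lift ord0 i) = \sum_(i < K) N ^ i * b (lift ord0 i).
  by apply/eqP; rewrite -(eqn_pmul2l Np); apply/eqP; move: H; rewrite h0 => /addnI.
have := IH _ _ (fun j => Ha (lift ord0 j)) (fun j => Hb (lift ord0 j)) h1.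
by case: (unliftP ord0 i) => [j ->|->] //; apply.
Qed.

Lemma cyc_flow (V E : finType) (tl hd : E -> V) (ok : pred E) (g : E) :
  ok g -> tl g != hd g -> connect (arcs tl hd ok) (hd g) (tl g) ->
  exists phi : E -> nat, flowT tl hd phi /\ 0 < phi g /\ forall f, ~~ ok f -> phi f = 0.
Proof.
move=> okg nl c.
have [k [vs [es [vsi [esi [key [i0 ei0]]]]]]] := cyc_exists okg nl c.
exists (fun f => #|[set i | es i == f]|); split.
  apply: cycle_flow => i; have [_ [_ ->]] := key i; by have [_ [-> _]] := key (ordS i).
split.
  by apply/card_gt0P; exists i0; rewrite inE ei0.
move=> f nf; apply/eqP; rewrite cards_eq0; apply/eqP/setP => i; rewrite !inE.
apply/negP => /eqP ef; have [oki _] := key i; by move: nf; rewrite -ef oki.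
Qed.

Lemma trans_ratio (a1 a2 a3 b1 b2 b3 : nat) :
  0 < b1 -> 0 < b2 -> 0 < b3 ->
  a1 * b2 < a2 * b1 -> a2 * b3 < a3 * b2 -> a1 * b3 < a3 * b1.
Proof.
move=> p1 p2 p3 h1 h2.
have h1' : a1 * b2 * b3 < a2 * b1 * b3 by rewrite ltn_pmul2r.
have h2' : a2 * b3 * b1 < a3 * b2 * b1 by rewrite ltn_pmul2r.
rewrite -(ltn_pmul2r p2).
have e1 : a1 * b3 * b2 = a1 * b2 * b3 by rewrite -!mulnA (mulnC b3).
have e2 : a3 * b1 * b2 = a3 * b2 * b1 by rewrite -!mulnA (mulnC b1).
have e3 : a2 * b1 * b3 = a2 * b3 * b1 by rewrite -!mulnA (mulnC b1).
rewrite e1 e2; apply: ltn_trans h1' _; by rewrite e3.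
Qed.


Theorem corollaryc (V E : finType) (tl hd : E -> V) :
  totally_cyclic tl hd ->
  no_loops tl hd ->
  no_parallel_antiparallel tl hd ->
  three_edge_connected tl hd ->
  exists r : E -> nat, injective r /\ strong_map_dual_to_order tl hd r.
Proof.
move=> tc nl _ tec.
have st := tc_strong tc.
have W0 : forall x : E * E, exists phi : E -> nat, flowT tl hd phi /\
   (x.1 == x.2 -> 0 < phi x.1) /\ (x.1 != x.2 -> (0 < phi x.1) != (0 < phi x.2)).
  case=> a b /=.
  case: (eqVneq a b) => [<-|nab].
    have [phi [fl [pa _]]] := cyc_flow (ok := predT) isT (nl a) (st a).
    by exists phi.
  case: (dichotomy tec st nab) => c.
    have [phi [fl [pa pb]]] := cyc_flow (ok := fun f => f != b) nab (nl a) c.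
    by exists phi; split => //; split => // _; rewrite pa pb ?eqxx.
  have nba : b != a by rewrite eq_sym.
  have [phi [fl [pa pb]]] := cyc_flow (ok := fun f => f != a) nba (nl b) c.
  by exists phi; split => //; split => // _; rewrite pa pb ?eqxx.
have [W HW] := fin_all_exists W0.
pose K := #|{: E * E}|.
pose ph (i : 'I_K) := W (enum_val i).
pose phi2 f := \sum_(i < K) 1 * ph i f.
pose M := \sum_f phi2 f.
pose N := M * M + 1.
pose phi1 f := \sum_(i < K) N ^ i * ph i f.
have fl2 : flowT tl hd phi2 by apply: flow_lin => i; have [] := HW (enum_val i).
have fl1 : flowT tl hd phi1 by apply: flow_lin => i; have [] := HW (enum_val i).
have phle : forall i f, ph i f <= phi2 f.
  by move=> i f; rewrite /phi2 (bigD1 i) //= mul1n leq_addr.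
have p2le : forall f, phi2 f <= M by move=> f; rewrite /M (bigD1 f) //= leq_addr.
have p2pos : forall f, 0 < phi2 f.
  move=> f; apply: leq_trans (phle (enum_rank (f, f)) f).
  by have [_ [H _]] := HW (f, f); rewrite /ph enum_rankK; apply: H.
have dist : forall e e', e != e' -> phi1 e * phi2 e' != phi1 e' * phi2 e.
  move=> e e' nee; apply/negP => /eqP H.
  have H' : \sum_(i < K) N ^ i * (ph i e * phi2 e') = \sum_(i < K) N ^ i * (ph i e' * phi2 e).
    move: H; rewrite /phi1 !big_distrl /=.
    by under eq_bigr do rewrite -mulnA; under [in X in _ = X -> _]eq_bigr do rewrite -mulnA.
  have bnd : forall i x y, ph i x * phi2 y < N.
    move=> i x y; rewrite /N addn1 ltnS; apply: leq_mul.
      exact: leq_trans (phle i x) (p2le x).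
    exact: p2le.
  have := digits (fun i => bnd i e e') (fun i => bnd i e' e) H' (enum_rank (e, e')).
  have [_ [_ X]] := HW (e, e'); move: (X nee) => /=.
  rewrite /ph enum_rankK.
  have := p2pos e; have := p2pos e'.
  by case: (W (e, e') e) => [|x]; case: (W (e, e') e') => [|y] //= p1 p2 _ h; nia.
pose bigger e f := phi1 e * phi2 f < phi1 f * phi2 e.
pose r e := #|[set f | bigger e f]|.
have tr : forall e f g, bigger e f -> bigger f g -> bigger e g.
  by move=> e f g; apply: trans_ratio.
have tot : forall e f, e != f -> bigger e f || bigger f e.
  move=> e f nef; rewrite /bigger; have := dist e f nef.
  case: ltngtP => //.
have key : forall e f, bigger e f -> r f < r e.
  move=> e f bef; apply: proper_card; apply/properP; split.
    by apply/subsetP => g; rewrite !inE; apply: tr.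
  by exists f; rewrite !inE // /bigger ltnn.
have rlt : forall e f, (r f < r e) = bigger e f.
  move=> e f; apply/idP/idP; last exact: key.
  move=> H; case: (eqVneq e f) => [ef|nef]; first by move: H; rewrite ef ltnn.
  case/orP: (tot e f nef) => // /key H2; lia.
exists r; split.
  move=> e f ref; apply/eqP/negPn/negP => nef.
  by case/orP: (tot e f nef) => /key; rewrite ref ltnn.
move=> X [e [->|->]].
- pose p f := phi2 e * phi1 f; pose q f := phi1 e * phi2 f.
  have -> : [set f | r f < r e] = [set f | q f < p f].
    by apply/setP => f; rewrite !inE rlt /bigger /p /q (mulnC (phi2 e)).
  have -> : [set f | r e < r f] = [set f | p f < q f].
    by apply/setP => f; rewrite !inE rlt /bigger /p /q (mulnC (phi2 e)).
  by apply: flow_covector => //; apply: flow_scale.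
- pose p f := phi2 e * phi1 f; pose q f := phi1 e * phi2 f.
  have -> : [set f | r e < r f] = [set f | p f < q f].
    by apply/setP => f; rewrite !inE rlt /bigger /p /q (mulnC (phi2 e)).
  have -> : [set f | r f < r e] = [set f | q f < p f].
    by apply/setP => f; rewrite !inE rlt /bigger /p /q (mulnC (phi2 e)).
  by apply: flow_covector => //; apply: flow_scale.
Qed.
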